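(* Let $(\mathcal{A},\succ_{\mathcal{A}},\prec_{\mathcal{A}})$ be a finite-dimensional antidendriform algebra with associated antiassociative algebra $(\mathcal{A},\ast_{\mathcal{A}})$, and let $(\succ_{\mathcal{A}^*},\prec_{\mathcal{A}^*})$ be an antidendriform structure on $\mathcal{A}^*$ with associated antiassociative algebra $(\mathcal{A}^*,\ast_{\mathcal{A}^*})$. Then $(\mathcal{A},\mathcal{A}^*,R^*_{\prec_{\mathcal{A}}},L^*_{\succ_{\mathcal{A}}},R^*_{\prec_{\mathcal{A}^*}},L^*_{\succ_{\mathcal{A}^*}})$ is a matched pair of antiassociative algebras if and only if $$(\mathcal{A},\mathcal{A}^*,\,R^*_{\succ_{\mathcal{A}}}+R^*_{\prec_{\mathcal{A}}},\,-L^*_{\prec_{\mathcal{A}}},\,-R^*_{\succ_{\mathcal{A}}},\,L^*_{\succ_{\mathcal{A}}}+L^*_{\prec_{\mathcal{A}}},\,R^*_{\succ_{\mathcal{A}^*}}+R^*_{\prec_{\mathcal{A}^*}},\,-L^*_{\prec_{\mathcal{A}^*}},\,-R^*_{\succ_{\mathcal{A}^*}},\,L^*_{\succ_{\mathcal{A}^*}}+L^*_{\prec_{\mathcal{A}^*}})$$ is a matched pair of antidendriform algebras.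
   Context: An antiassociative algebra is a vector space with bilinear product satisfying $(x\cdot y)\cdot z=-x\cdot(y\cdot z)$. An antidendriform algebra is a vector space with bilinear products $\prec,\succ$ such that, with $x\ast y=x\prec y+x\succ y$: $(x\prec y)\prec z=-x\prec(y\ast z)$, $(x\succ y)\prec z=-x\succ(y\prec z)$, $x\succ(y\succ z)=-(x\ast y)\succ z$. For $\mathcal{A}$ finite-dimensional (identifying $\mathcal{A}^{**}=\mathcal{A}$) and $\diamond\in\{\succ,\prec\}$, the maps $L^*_{\diamond_{\mathcal{A}}},R^*_{\diamond_{\mathcal{A}}}:\mathcal{A}\to gl(\mathcal{A}^* )$ and $L^*_{\diamond_{\mathcal{A}^*}},R^*_{\diamond_{\mathcal{A}^*}}:\mathcal{A}^*\to gl(\mathcal{A})$ are $\langle L^*_{\diamond_{\mathcal{A}}}(x)a^*,y\rangle=\langle x\diamond_{\mathcal{A}}y,a^*\rangle$, $\langle R^*_{\diamond_{\mathcal{A}}}(x)a^*,y\rangle=\langle y\diamond_{\mathcal{A}}x,a^*\rangle$, $\langle L^*_{\diamond_{\mathcal{A}^*}}(a^* )x,b^*\rangle=\langle a^*\diamond_{\mathcal{A}^*}b^*,x\rangle$, $\langle R^*_{\diamond_{\mathcal{A}^*}}(a^* )x,b^*\rangle=\langle b^*\diamond_{\mathcal{A}^*}a^*,x\rangle$. A bimodule of an antiassociative algebra $\mathcal{A}$ is $(l,r,V)$ with $l(xy)=-l(x)l(y)$, $r(xy)=-r(y)r(x)$, $l(x)r(y)=-r(y)l(x)$. A matched pair of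 antiassociative algebras $(\mathcal{A},\cdot),(\mathcal{B},\circ)$ is $(\mathcal{A},\mathcal{B},l_{\mathcal{A}},r_{\mathcal{A}},l_{\mathcal{B}},r_{\mathcal{B}})$ with $(l_{\mathcal{A}},r_{\mathcal{A}},\mathcal{B})$ a bimodule of $\mathcal{A}$, $(l_{\mathcal{B}},r_{\mathcal{B}},\mathcal{A})$ a bimodule of $\mathcal{B}$, and for all $x,y\in\mathcal{A},a,b\in\mathcal{B}$: $l_{\mathcal{A}}(x)(a\circ b)=-l_{\mathcal{A}}(r_{\mathcal{B}}(a)x)b-(l_{\mathcal{A}}(x)a)\circ b$; $r_{\mathcal{A}}(x)(a\circ b)=-r_{\mathcal{A}}(l_{\mathcal{B}}(b)x)a-a\circ(r_{\mathcal{A}}(x)b)$; $l_{\mathcal{B}}(a)(x\cdot y)=-l_{\mathcal{B}}(r_{\mathcal{A}}(x)a)y-(l_{\mathcal{B}}(a)x)\cdot y$; $r_{\mathcal{B}}(a)(x\cdot y)=-r_{\mathcal{B}}(l_{\mathcal{A}}(y)a)x-x\cdot(r_{\mathcal{B}}(a)y)$; $l_{\mathcal{A}}(l_{\mathcal{B}}(a)x)b+(r_{\mathcal{A}}(x)a)\circ b+r_{\mathcal{A}}(r_{\mathcal{B}}(b)x)a+a\circ(l_{\mathcal{A}}(x)b)=0$; $l_{\mathcal{B}}(l_{\mathcal{A}}(x)a)y+(r_{\mathcal{B}}(a)x)\cdot y+r_{\mathcal{B}}(r_{\mathcal{A}}(y)a)x+x\cdot(l_{\mathcal{B}}(a)y)=0$.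 A bimodule of an antidendriform algebra $(\mathcal{A},\succ,\prec)$ is a tuple $(l_\succ,r_\succ,l_\prec,r_\prec,V)$ of linear maps $\mathcal{A}\to gl(V)$ such that $\mathcal{A}\oplus V$ with $(x+u)\succ(y+v)=x\succ y+l_\succ(x)v+r_\succ(y)u$, $(x+u)\prec(y+v)=x\prec y+l_\prec(x)v+r_\prec(y)u$ is antidendriform. A matched pair of antidendriform algebras $\mathcal{A},\mathcal{B}$ is a tuple $(\mathcal{A},\mathcal{B},l_{\succ_{\mathcal{A}}},r_{\succ_{\mathcal{A}}},l_{\prec_{\mathcal{A}}},r_{\prec_{\mathcal{A}}},l_{\succ_{\mathcal{B}}},r_{\succ_{\mathcal{B}}},l_{\prec_{\mathcal{B}}},r_{\prec_{\mathcal{B}}})$ with the first quadruple a bimodule of $\mathcal{A}$ on $\mathcal{B}$ and the second a bimodule of $\mathcal{B}$ on $\mathcal{A}$, such that $\mathcal{A}\oplus\mathcal{B}$ with $(x+a)\succ(y+b)=(x\succ_{\mathcal{A}}y+r_{\succ_{\mathcal{B}}}(b)x+l_{\succ_{\mathcal{B}}}(a)y)+(l_{\succ_{\mathcal{A}}}(x)b+r_{\succ_{\mathcal{A}}}(y)a+a\succ_{\mathcal{B}}b)$ and $(x+a)\prec(y+b)=(x\prec_{\mathcal{A}}y+r_{\prec_{\mathcal{B}}}(b)x+l_{\prec_{\mathcal{B}}}(a)y)+(l_{\prec_{\mathcal{A}}}(x)b+r_{\prec_{\mathcal{A}}}(y)a+a\prec_{\mathcal{B}}b)$ is an antidendriform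 algebra. *)

(* Defs.v *)
From HB Require Import structures.
From mathcomp Require Import all_boot all_order all_algebra.
Set Implicit Arguments. Unset Strict Implicit. Unset Printing Implicit Defensive.
Import GRing.Theory.
Local Open Scope ring_scope.

Section Defs.
Variable K : fieldType.

Definition lin_map (U W : lmodType K) (g : U -> W) :=
  forall (a : K) (u v : U), g (a *: u + v) = a *: g u + g v.

Definition bilin (U V W : lmodType K) (f : U -> V -> W) :=
  (forall x, lin_map (f x)) /\ (forall y, lin_map (fun x => f x y)).

(* a linear map A -> gl(V), curried *)
Definition rep (A V : lmodType K) (l : A -> V -> V) := bilin l.

Definition antiassoc (A : lmodType K) (mul : A -> A -> A) :=
  bilin mul /\ forall x y z, mul (mul x y) z = - mul x (mul y z).

Definition antidend (A : lmodType K) (succ prec : A -> A -> A) :=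
  bilin succ /\ bilin prec /\
  let star x y := succ x y + prec x y in
  forall x y z,
    [/\ prec (prec x y) z = - prec x (star y z),
        prec (succ x y) z = - succ x (prec y z) &
        succ x (succ y z) = - succ (star x y) z].

Definition dstar (A : lmodType K) (succ prec : A -> A -> A) :=
  fun x y => prec x y + succ x y.

Definition aa_bimodule (A V : lmodType K) (mul : A -> A -> A)
    (l r : A -> V -> V) :=
  rep l /\ rep r /\
  forall x y v,
    [/\ l (mul x y) v = - l x (l y v),
        r (mul x y) v = - r y (r x v) &
        l x (r y v) = - r y (l x v)].

Definition aa_matched_pair (A B : lmodType K)
    (mulA : A -> A -> A) (mulB : B -> B -> B)
    (lA rA : A -> B -> B) (lB rB : B -> A -> A) :=
  aa_bimodule mulA lA rA /\ aa_bimodule mulB lB rB /\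
  forall (x y : A) (a b : B),
    [/\ lA x (mulB a b) = - lA (rB a x) b - mulB (lA x a) b,
        rA x (mulB a b) = - rA (lB b x) a - mulB a (rA x b),
        lB a (mulA x y) = - lB (rA x a) y - mulA (lB a x) y &
        rB a (mulA x y) = - rB (lA y a) x - mulA x (rB a y)] /\
    lA (lB a x) b + mulB (rA x a) b + rA (rB b x) a + mulB a (lA x b) = 0 /\
    lB (lA x a) y + mulA (rB a x) y + rB (rA y a) x + mulA x (lB a y) = 0.

Definition sum_op (A B : lmodType K) (opA : A -> A -> A) (opB : B -> B -> B)
    (lA rA : A -> B -> B) (lB rB : B -> A -> A) : A * B -> A * B -> A * B :=
  fun p q => (opA p.1 q.1 + rB q.2 p.1 + lB p.2 q.1,
              lA p.1 q.2 + rA q.1 p.2 + opB p.2 q.2).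

(* bimodule (l_succ, r_succ, l_prec, r_prec, V) of an antidendriform algebra:
   A (+) V with the semidirect products is antidendriform *)
Definition ad_bimodule (A V : lmodType K) (succ prec : A -> A -> A)
    (ls rs lp rp : A -> V -> V) :=
  [/\ rep ls, rep rs, rep lp, rep rp &
  antidend
    (sum_op succ (fun _ _ : V => 0) ls rs (fun _ _ => 0) (fun _ _ => 0))
    (sum_op prec (fun _ _ : V => 0) lp rp (fun _ _ => 0) (fun _ _ => 0))].

Definition ad_matched_pair (A B : lmodType K)
    (sA pA : A -> A -> A) (sB pB : B -> B -> B)
    (lsA rsA lpA rpA : A -> B -> B) (lsB rsB lpB rpB : B -> A -> A) :=
  [/\ ad_bimodule sA pA lsA rsA lpA rpA,
      ad_bimodule sB pB lsB rsB lpB rpB &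
      antidend (sum_op sA sB lsA rsA lsB rsB) (sum_op pA pB lpA rpA lpB rpB)].

(* Finite-dimensional A = 'rV[K]_n, its dual = 'cV[K]_n,
   pairing <x,a> = (x *m a) 0 0, so the double dual is A. *)
Definition pairing (n : nat) (x : 'rV[K]_n) (a : 'cV[K]_n) : K := (x *m a) 0 0.

(* <L^dual(x) a, y> = <x op y, a> *)
Definition LdA n (op : 'rV[K]_n -> 'rV[K]_n -> 'rV[K]_n) (x : 'rV[K]_n)
    (a : 'cV[K]_n) : 'cV[K]_n :=
  \col_j pairing (op x (delta_mx 0 j)) a.
(* <R^dual(x) a, y> = <y op x, a> *)
Definition RdA n (op : 'rV[K]_n -> 'rV[K]_n -> 'rV[K]_n) (x : 'rV[K]_n)
    (a : 'cV[K]_n) : 'cV[K]_n :=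
  \col_j pairing (op (delta_mx 0 j) x) a.
(* <L^dual(a) x, b> = <a op b, x> *)
Definition LdAs n (op : 'cV[K]_n -> 'cV[K]_n -> 'cV[K]_n) (a : 'cV[K]_n)
    (x : 'rV[K]_n) : 'rV[K]_n :=
  \row_j pairing x (op a (delta_mx j 0)).
(* <R^dual(a) x, b> = <b op a, x> *)
Definition RdAs n (op : 'cV[K]_n -> 'cV[K]_n -> 'cV[K]_n) (a : 'cV[K]_n)
    (x : 'rV[K]_n) : 'rV[K]_n :=
  \row_j pairing x (op (delta_mx j 0) a).

End Defs.

(* Main.v *)
Require Import Defs.
From HB Require Import structures.
From mathcomp Require Import all_boot all_order all_algebra ring.
Import GRing.Theory.
Set Implicit Arguments. Unset Strict Implicit. Unset Printing Implicit Defensive.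
Local Open Scope ring_scope.

Section Lin.
Variable K : fieldType.

Lemma linD (U W : lmodType K) (g : U -> W) : lin_map g -> forall u v, g (u + v) = g u + g v.
Proof. by move=> h u v; have := h 1 u v; rewrite !scale1r. Qed.
Lemma lin0 (U W : lmodType K) (g : U -> W) : lin_map g -> g 0 = 0.
Proof. move=> h; have := linD h 0 0; rewrite addr0 => /(congr1 (fun t => t - g 0)); by rewrite subrr addrK. Qed.
Lemma linZ (U W : lmodType K) (g : U -> W) : lin_map g -> forall c u, g (c *: u) = c *: g u.
Proof. by move=> h c u; rewrite -[c *: u]addr0 h lin0 // addr0. Qed.
Lemma linN (U W : lmodType K) (g : U -> W) : lin_map g -> forall u, g (- u) = - g u.
Proof. by move=> h u; rewrite -scaleN1r linZ // scaleN1r. Qed.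

Variables (U V W : lmodType K) (f : U -> V -> W).
Hypothesis hf : bilin f.
Lemma bDl u1 u2 v : f (u1 + u2) v = f u1 v + f u2 v.
Proof. exact: (linD (hf.2 v)). Qed.
Lemma bDr u v1 v2 : f u (v1 + v2) = f u v1 + f u v2.
Proof. exact: (linD (hf.1 u)). Qed.
Lemma bNl u v : f (- u) v = - f u v.
Proof. exact: (linN (hf.2 v)). Qed.
Lemma bNr u v : f u (- v) = - f u v.
Proof. exact: (linN (hf.1 u)). Qed.
Lemma bZl c u v : f (c *: u) v = c *: f u v.
Proof. exact: (linZ (hf.2 v)). Qed.
Lemma bZr c u v : f u (c *: v) = c *: f u v.
Proof. exact: (linZ (hf.1 u)). Qed.
Lemma b0l v : f 0 v = 0.
Proof. exact: (lin0 (hf.2 v)). Qed.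
Lemma b0r u : f u 0 = 0.
Proof. exact: (lin0 (hf.1 u)). Qed.
End Lin.

Section Bil.
Variables (K : fieldType) (U V W : lmodType K).
Lemma bilin_add (f g : U -> V -> W) : bilin f -> bilin g -> bilin (fun x y => f x y + g x y).
Proof.
move=> hf hg; split=> [x|y] c u v /=.
  by rewrite (bDr hf) (bDr hg) (bZr hf) (bZr hg) scalerDr -!addrA (addrCA (f x v)).
by rewrite (bDl hf) (bDl hg) (bZl hf) (bZl hg) scalerDr -!addrA (addrCA (f v y)).
Qed.
Lemma bilin_opp (f : U -> V -> W) : bilin f -> bilin (fun x y => - f x y).
Proof.
move=> hf; split=> [x|y] c u v /=.
  by rewrite (bDr hf) (bZr hf) opprD scalerN.
by rewrite (bDl hf) (bZl hf) opprD scalerN.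
Qed.
Lemma bilin0 : bilin (fun (_ : U) (_ : V) => (0 : W)).
Proof. by split=> [x|y] c u v /=; rewrite scaler0 addr0. Qed.
End Bil.


Ltac mxac := apply/matrixP=> ? ?; rewrite !mxE; ring.

Section Abs.
Variables (K : fieldType) (m1 m2 m3 m4 : nat).
Local Notation A := 'M[K]_(m1,m2).
Local Notation B := 'M[K]_(m3,m4).

Lemma bilin_sum_op (opA : A -> A -> A) (opB : B -> B -> B) (lA rA : A -> B -> B)
  (lB rB : B -> A -> A) :
  bilin opA -> bilin opB -> bilin lA -> bilin rA -> bilin lB -> bilin rB ->
  bilin (sum_op opA opB lA rA lB rB).
Proof.
move=> h1 h2 h3 h4 h5 h6; split=> [[x a]|[y b]] c [x1 a1] [x2 a2]; rewrite /sum_op /=;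
  congr pair;
  rewrite ?(bDl h1) ?(bDr h1) ?(bZl h1) ?(bZr h1)
          ?(bDl h2) ?(bDr h2) ?(bZl h2) ?(bZr h2)
          ?(bDl h3) ?(bDr h3) ?(bZl h3) ?(bZr h3)
          ?(bDl h4) ?(bDr h4) ?(bZl h4) ?(bZr h4)
          ?(bDl h5) ?(bDr h5) ?(bZl h5) ?(bZr h5)
          ?(bDl h6) ?(bDr h6) ?(bZl h6) ?(bZr h6); mxac.
Qed.

Lemma assoc_of_mp (mA : A -> A -> A) (mB : B -> B -> B) (lA rA : A -> B -> B)
  (lB rB : B -> A -> A) :
  bilin mA -> bilin mB ->
  (forall x y z, mA (mA x y) z = - mA x (mA y z)) ->
  (forall x y z, mB (mB x y) z = - mB x (mB y z)) ->
  aa_matched_pair mA mB lA rA lB rB ->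
  forall u v w, sum_op mA mB lA rA lB rB (sum_op mA mB lA rA lB rB u v) w =
    - sum_op mA mB lA rA lB rB u (sum_op mA mB lA rA lB rB v w).
Proof.
move=> h1 h2 aA aB [[h3 [h4 bA]] [[h5 [h6 bB]] C]] [x a] [y b] [z c].
rewrite /sum_op /=.
rewrite  ?(bDl h1) ?(bDr h1) ?(bDl h2) ?(bDr h2) ?(bDl h3) ?(bDr h3)
         ?(bDl h4) ?(bDr h4) ?(bDl h5) ?(bDr h5) ?(bDl h6) ?(bDr h6).
have bA1 x1 y1 v : lA (mA x1 y1) v = - lA x1 (lA y1 v) by case: (bA x1 y1 v).
have bA2 x1 y1 v : rA (mA x1 y1) v = - rA y1 (rA x1 v) by case: (bA x1 y1 v).
have bA3 x1 y1 v : lA x1 (rA y1 v) = - rA y1 (lA x1 v) by case: (bA x1 y1 v).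
have bB1 x1 y1 v : lB (mB x1 y1) v = - lB x1 (lB y1 v) by case: (bB x1 y1 v).
have bB2 x1 y1 v : rB (mB x1 y1) v = - rB y1 (rB x1 v) by case: (bB x1 y1 v).
have bB3 x1 y1 v : lB x1 (rB y1 v) = - rB y1 (lB x1 v) by case: (bB x1 y1 v).
have c1 x1 a1 b1 : lA x1 (mB a1 b1) = - lA (rB a1 x1) b1 - mB (lA x1 a1) b1.
  by case: (C x1 x1 a1 b1) => [[]].
have c2 x1 a1 b1 : rA x1 (mB a1 b1) = - rA (lB b1 x1) a1 - mB a1 (rA x1 b1).
  by case: (C x1 x1 a1 b1) => [[]].
have c3 a1 x1 y1 : lB a1 (mA x1 y1) = - lB (rA x1 a1) y1 - mA (lB a1 x1) y1.
  by case: (C x1 y1 a1 a1) => [[]].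
have c4 a1 x1 y1 : rB a1 (mA x1 y1) = - rB (lA y1 a1) x1 - mA x1 (rB a1 y1).
  by case: (C x1 y1 a1 a1) => [[]].
have c5 x1 a1 b1 : lA (lB a1 x1) b1 = - (mB (rA x1 a1) b1 + (rA (rB b1 x1) a1 + mB a1 (lA x1 b1))).
  case: (C x1 x1 a1 b1) => _ [+ _]; move/eqP; rewrite -!addrA addr_eq0; by move/eqP.
have c6 a1 x1 y1 : lB (lA x1 a1) y1 = - (mA (rB a1 x1) y1 + (rB (rA y1 a1) x1 + mA x1 (lB a1 y1))).
  case: (C x1 y1 a1 a1) => _ [_]; move/eqP; rewrite -!addrA addr_eq0; by move/eqP.
congr pair.
  rewrite aA bB2 bB1 c4 c3 c6 bB3.
  rewrite ?(bDl h1) ?(bDr h1) ?(bDl h5) ?(bDr h5) ?(bDl h6) ?(bDr h6)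
          ?(bNl h1) ?(bNr h1) ?(bNl h5) ?(bNr h5) ?(bNl h6) ?(bNr h6).
  mxac.
rewrite aB bA1 bA2 c1 c2 c5 bA3.
rewrite ?(bDl h2) ?(bDr h2) ?(bDl h3) ?(bDr h3) ?(bDl h4) ?(bDr h4)
        ?(bNl h2) ?(bNr h2) ?(bNl h3) ?(bNr h3) ?(bNl h4) ?(bNr h4).
mxac.
Qed.
End Abs.


Ltac solve_with E :=
  let i := fresh "i" in let j := fresh "j" in let Eij := fresh "Eij" in
  apply/matrixP => i j; pose proof (congr1 (fun M => @fun_of_matrix _ _ _ M i j) E) as Eij; simpl in Eij; rewrite ?mxE in Eij *;
  lazymatch type of Eij with ?e1 = ?e2 =>
    apply/eqP; rewrite -subr_eq0; apply/eqP;
    first [ transitivity (e1 - e2); [ring | by rewrite Eij subrr]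
          | transitivity (-(e1 - e2)); [ring | by rewrite Eij subrr oppr0] ] end.

Ltac zs E h1 h2 h3 h4 h5 h6 := do 3 rewrite /sum_op /= ?(b0l h1) ?(b0r h1) ?(b0l h2) ?(b0r h2)
  ?(b0l h3) ?(b0r h3) ?(b0l h4) ?(b0r h4) ?(b0l h5) ?(b0r h5) ?(b0l h6) ?(b0r h6)
  ?addr0 ?add0r ?oppr0 in E.

Section Abs2.
Variables (K : fieldType) (m1 m2 m3 m4 : nat).
Local Notation A := 'M[K]_(m1,m2).
Local Notation B := 'M[K]_(m3,m4).

Lemma mp_of_assoc (mA : A -> A -> A) (mB : B -> B -> B) (lA rA : A -> B -> B)
  (lB rB : B -> A -> A) :
  bilin mA -> bilin mB -> bilin lA -> bilin rA -> bilin lB -> bilin rB ->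
  (forall u v w, sum_op mA mB lA rA lB rB (sum_op mA mB lA rA lB rB u v) w =
    - sum_op mA mB lA rA lB rB u (sum_op mA mB lA rA lB rB v w)) ->
  aa_matched_pair mA mB lA rA lB rB.
Proof.
move=> h1 h2 h3 h4 h5 h6 H.
have Z : forall u v w (f : A * B -> A) , f (sum_op mA mB lA rA lB rB (sum_op mA mB lA rA lB rB u v) w) =
    f (- sum_op mA mB lA rA lB rB u (sum_op mA mB lA rA lB rB v w)) by move=> *; rewrite H.
split; [split; [exact h3 | split; [exact h4 | move=> x y c; split]]|].
- have E := H (x,0) (y,0) (0,c); move/(congr1 snd): E => E; zs E h1 h2 h3 h4 h5 h6; solve_with E.
- have E := H (0,c) (x,0) (y,0); move/(congr1 snd): E => E; zs E h1 h2 h3 h4 h5 h6; solve_with E.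
- have E := H (x,0) (0,c) (y,0); move/(congr1 snd): E => E; zs E h1 h2 h3 h4 h5 h6; solve_with E.
split; [split; [exact h5 | split; [exact h6 | move=> a b x; split]]|].
- have E := H (0,a) (0,b) (x,0); move/(congr1 fst): E => E; zs E h1 h2 h3 h4 h5 h6; solve_with E.
- have E := H (x,0) (0,a) (0,b); move/(congr1 fst): E => E; zs E h1 h2 h3 h4 h5 h6; solve_with E.
- have E := H (0,a) (x,0) (0,b); move/(congr1 fst): E => E; zs E h1 h2 h3 h4 h5 h6; solve_with E.
move=> x y a b; split; [split|split].
- have E := H (x,0) (0,a) (0,b); move/(congr1 snd): E => E; zs E h1 h2 h3 h4 h5 h6; solve_with E.
- have E := H (0,a) (0,b) (x,0); move/(congr1 snd): E => E; zs E h1 h2 h3 h4 h5 h6; solve_with E.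
- have E := H (0,a) (x,0) (y,0); move/(congr1 fst): E => E; zs E h1 h2 h3 h4 h5 h6; solve_with E.
- have E := H (x,0) (y,0) (0,a); move/(congr1 fst): E => E; zs E h1 h2 h3 h4 h5 h6; solve_with E.
- have E := H (0,a) (x,0) (0,b); move/(congr1 snd): E => E; zs E h1 h2 h3 h4 h5 h6; solve_with E.
- have E := H (x,0) (0,a) (y,0); move/(congr1 fst): E => E; zs E h1 h2 h3 h4 h5 h6; solve_with E.
Qed.
End Abs2.


Section Mx.
Variables (K : fieldType) (m1 m2 : nat).
Local Notation A := 'M[K]_(m1,m2).
Lemma ad_assoc_mx (s p : A -> A -> A) : antidend s p ->
  forall x y z, s (s x y + p x y) z + p (s x y + p x y) z =
     - (s x (s y z + p y z) + p x (s y z + p y z)).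
Proof.
case=> hs [hp H] x y z; case: (H x y z) => h1 h2 h3.
rewrite (bDr hp) in h1; rewrite (bDl hs) in h3.
rewrite (bDl hs) (bDl hp) (bDr hs) (bDr hp) h1 h2 h3; mxac.
Qed.

End Mx.

Section Abs3.
Variables (K : fieldType) (m1 m2 m3 m4 : nat).
Local Notation A := 'M[K]_(m1,m2).
Local Notation B := 'M[K]_(m3,m4).

Lemma ad_assoc_pair (s p : A * B -> A * B -> A * B) : antidend s p ->
  forall x y z, s (s x y + p x y) z + p (s x y + p x y) z =
     - (s x (s y z + p y z) + p x (s y z + p y z)).
Proof.
case=> hs [hp H] x y z; case: (H x y z) => h1 h2 h3.
rewrite (bDr hp) in h1; rewrite (bDl hs) in h3.
rewrite (bDl hs) (bDl hp) (bDr hs) (bDr hp) h1 h2 h3.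
apply: injective_projections => /=; mxac.
Qed.

Lemma sum_SP (sA pA mA : A -> A -> A) (sB pB mB : B -> B -> B)
  (lsA rsA lpA rpA lA rA : A -> B -> B) (lsB rsB lpB rpB lB rB : B -> A -> A) :
  (forall x y, mA x y = sA x y + pA x y) -> (forall x y, mB x y = sB x y + pB x y) ->
  (forall x y, lA x y = lsA x y + lpA x y) -> (forall x y, rA x y = rsA x y + rpA x y) ->
  (forall x y, lB x y = lsB x y + lpB x y) -> (forall x y, rB x y = rsB x y + rpB x y) ->
  forall u v, sum_op sA sB lsA rsA lsB rsB u v + sum_op pA pB lpA rpA lpB rpB u v
    = sum_op mA mB lA rA lB rB u v.
Proof.
move=> e1 e2 e3 e4 e5 e6 [x a] [y b]; rewrite /sum_op /= e1 e2 e3 e4 e5 e6.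
congr pair; mxac.
Qed.

Variable pr : A -> B -> K.
Hypotheses (prDl : forall x1 x2 b, pr (x1 + x2) b = pr x1 b + pr x2 b)
  (prNl : forall x b, pr (- x) b = - pr x b)
  (prDr : forall x b1 b2, pr x (b1 + b2) = pr x b1 + pr x b2)
  (prNr : forall x b, pr x (- b) = - pr x b)
  (injl : forall x1 x2, (forall b, pr x1 b = pr x2 b) -> x1 = x2)
  (injr : forall b1 b2, (forall x, pr x b1 = pr x b2) -> b1 = b2).

Definition om (u v : A * B) := pr u.1 v.2 - pr v.1 u.2.

Lemma pr0l b : pr 0 b = 0.
Proof. have := prDl 0 0 b; rewrite addr0 => /(congr1 (fun t => t - pr 0 b)). by rewrite subrr addrK. Qed.
Lemma pr0r x : pr x 0 = 0.
Proof. have := prDr x 0 0; rewrite addr0 => /(congr1 (fun t => t - pr x 0)). by rewrite subrr addrK. Qed.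

Lemma om_inj u v : (forall w, om u w = om v w) -> u = v.
Proof.
case: u => x a; case: v => y b H; congr pair.
  apply: injl => c; have := H (0, c); by rewrite /om /= !pr0l !subr0.
apply: injr => z; have := H (z, 0); rewrite /om /= !pr0r !sub0r => /eqP.
by rewrite eqr_opp => /eqP.
Qed.
Lemma omNl u w : om (- u) w = - om u w.
Proof. by rewrite /om /= prNl prNr opprD opprK. Qed.
Lemma omNr u w : om u (- w) = - om u w.
Proof. by rewrite /om /= prNl prNr opprD opprK. Qed.

Lemma antidend_of_adj (S P : A * B -> A * B -> A * B) :
  bilin S -> bilin P ->
  (forall u v w, S (S u v + P u v) w + P (S u v + P u v) w =
     - (S u (S v w + P v w) + P u (S v w + P v w))) ->
  (forall u v w, om (S u v) w = om v (S w u + P w u)) ->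
  (forall u v w, om (P u v) w = om u (S v w + P v w)) ->
  antidend S P.
Proof.
move=> hS hP As aS aP; split; first exact hS; split; first exact hP.
move=> u v w; split; apply: om_inj => t; rewrite omNl.
- rewrite !aP As omNr; exact: (esym (opprK _)).
- by rewrite aP aS aS aP As omNr.
- by rewrite aS aS aS As omNr.
Qed.

Lemma adj_sum_op (sA pA : A -> A -> A) (sB pB : B -> B -> B)
  (lsA rsA lpA rpA : A -> B -> B) (lsB rsB lpB rpB : B -> A -> A) :
  (forall z x b, pr z (lsA x b) = pr (sA z x) b + pr (pA z x) b) ->
  (forall z y a, pr z (rsA y a) = - pr (pA y z) a) ->
  (forall a y c, pr (lsB a y) c = pr y (sB c a) + pr y (pB c a)) ->
  (forall b x c, pr (rsB b x) c = - pr x (pB b c)) ->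
  (forall z x b, pr z (lpA x b) = - pr (sA z x) b) ->
  (forall z y a, pr z (rpA y a) = pr (sA y z) a + pr (pA y z) a) ->
  (forall a y c, pr (lpB a y) c = - pr y (sB c a)) ->
  (forall b x c, pr (rpB b x) c = pr x (sB b c) + pr x (pB b c)) ->
  (forall u v w, om (sum_op sA sB lsA rsA lsB rsB u v) w =
     om v (sum_op sA sB lsA rsA lsB rsB w u + sum_op pA pB lpA rpA lpB rpB w u)) /\
  (forall u v w, om (sum_op pA pB lpA rpA lpB rpB u v) w =
     om u (sum_op sA sB lsA rsA lsB rsB v w + sum_op pA pB lpA rpA lpB rpB v w)).
Proof.
move=> H1 H2 H3 H4 H5 H6 H7 H8; split=> [[x a] [y b] [z c]|[x a] [y b] [z c]];
  rewrite /om /sum_op /= !prDl !prDr ?H1 ?H2 ?H3 ?H4 ?H5 ?H6 ?H7 ?H8; ring.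
Qed.


Lemma bilin_ext (U V W : lmodType K) (f g : U -> V -> W) :
  (forall x y, f x y = g x y) -> bilin g -> bilin f.
Proof.
move=> E [h1 h2]; split=> [x|y] c u v; rewrite !E; [exact: h1 | exact: h2].
Qed.

Lemma ad_of_aa (sA pA mA : A -> A -> A) (sB pB mB : B -> B -> B)
  (lsA rsA lpA rpA lA rA : A -> B -> B) (lsB rsB lpB rpB lB rB : B -> A -> A) :
  antidend sA pA -> antidend sB pB ->
  bilin lsA -> bilin rsA -> bilin lpA -> bilin rpA ->
  bilin lsB -> bilin rsB -> bilin lpB -> bilin rpB ->
  (forall z x b, pr z (lsA x b) = pr (sA z x) b + pr (pA z x) b) ->
  (forall z y a, pr z (rsA y a) = - pr (pA y z) a) ->
  (forall a y c, pr (lsB a y) c = pr y (sB c a) + pr y (pB c a)) ->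
  (forall b x c, pr (rsB b x) c = - pr x (pB b c)) ->
  (forall z x b, pr z (lpA x b) = - pr (sA z x) b) ->
  (forall z y a, pr z (rpA y a) = pr (sA y z) a + pr (pA y z) a) ->
  (forall a y c, pr (lpB a y) c = - pr y (sB c a)) ->
  (forall b x c, pr (rpB b x) c = pr x (sB b c) + pr x (pB b c)) ->
  (forall x y, mA x y = sA x y + pA x y) -> (forall x y, mB x y = sB x y + pB x y) ->
  (forall x y, lA x y = lsA x y + lpA x y) -> (forall x y, rA x y = rsA x y + rpA x y) ->
  (forall x y, lB x y = lsB x y + lpB x y) -> (forall x y, rB x y = rsB x y + rpB x y) ->
  aa_matched_pair mA mB lA rA lB rB ->
  antidend (sum_op sA sB lsA rsA lsB rsB) (sum_op pA pB lpA rpA lpB rpB).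
Proof.
move=> adA adB b1 b2 b3 b4 b5 b6 b7 b8 H1 H2 H3 H4 H5 H6 H7 H8 e1 e2 e3 e4 e5 e6 mp.
have [hsA [hpA _]] := adA; have [hsB [hpB _]] := adB.
have [aS aP] := adj_sum_op H1 H2 H3 H4 H5 H6 H7 H8.
apply: (antidend_of_adj (bilin_sum_op hsA hsB b1 b2 b5 b6) (bilin_sum_op hpA hpB b3 b4 b7 b8) _ aS aP).
move=> u v w; rewrite !(sum_SP e1 e2 e3 e4 e5 e6).
apply: (assoc_of_mp (bilin_ext e1 (bilin_add hsA hpA)) (bilin_ext e2 (bilin_add hsB hpB)) _ _ mp).
- by move=> x y z; rewrite !e1; exact: (ad_assoc_mx adA).
- by move=> x y z; rewrite !e2; exact: (ad_assoc_mx adB).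
Qed.

End Abs3.


Section Conc.
Variables (K : fieldType) (n : nat).
Local Notation V := 'rV[K]_n.
Local Notation W := 'cV[K]_n.

Lemma pDl (x1 x2 : V) a : pairing (x1 + x2) a = pairing x1 a + pairing x2 a.
Proof. by rewrite /pairing mulmxDl mxE. Qed.
Lemma pNl (x : V) a : pairing (- x) a = - pairing x a.
Proof. by rewrite /pairing mulNmx mxE. Qed.
Lemma pZl c (x : V) a : pairing (c *: x) a = c * pairing x a.
Proof. by rewrite /pairing -scalemxAl mxE. Qed.
Lemma pDr (x : V) (a1 a2 : W) : pairing x (a1 + a2) = pairing x a1 + pairing x a2.
Proof. by rewrite /pairing mulmxDr mxE. Qed.
Lemma pNr (x : V) (a : W) : pairing x (- a) = - pairing x a.
Proof. by rewrite /pairing mulmxN mxE. Qed.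
Lemma pZr c (x : V) (a : W) : pairing x (c *: a) = c * pairing x a.
Proof. by rewrite /pairing -scalemxAr mxE. Qed.
Lemma p0l (a : W) : pairing (0 : V) a = 0.
Proof. by rewrite /pairing mul0mx mxE. Qed.
Lemma p0r (x : V) : pairing x (0 : W) = 0.
Proof. by rewrite /pairing mulmx0 mxE. Qed.

Lemma pinjl (x1 x2 : V) : (forall a, pairing x1 a = pairing x2 a) -> x1 = x2.
Proof.
move=> H; apply/rowP => j; have := H (delta_mx j 0).
by rewrite /pairing -!colE !mxE.
Qed.
Lemma pinjr (a1 a2 : W) : (forall x, pairing x a1 = pairing x a2) -> a1 = a2.
Proof.
move=> H; apply/colP => j; have := H (delta_mx 0 j).
by rewrite /pairing -!rowE !mxE.
Qed.

Lemma pE (y : V) (b : W) : pairing y b = \sum_j y 0 j * b j 0.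
Proof. by rewrite /pairing mxE. Qed.

Lemma lin_rv (g : V -> K) : (forall u v, g (u + v) = g u + g v) ->
  (forall c u, g (c *: u) = c * g u) -> forall y, g y = \sum_j y 0 j * g (delta_mx 0 j).
Proof.
move=> gD gZ y; rewrite {1}(row_sum_delta y).
have g0 : g 0 = 0.
  have := gD 0 0; rewrite addr0 => /(congr1 (fun t => t - g 0)). by rewrite subrr addrK.
rewrite (big_morph g gD g0); apply: eq_bigr => j _; by rewrite gZ.
Qed.

Lemma lin_cv (g : W -> K) : (forall u v, g (u + v) = g u + g v) ->
  (forall c u, g (c *: u) = c * g u) -> forall b, g b = \sum_j b j 0 * g (delta_mx j 0).
Proof.
move=> gD gZ b; have := @lin_rv (fun y => g y^T) _ _ b^T.
rewrite trmxK => ->; first by apply: eq_bigr => j _; rewrite mxE trmx_delta.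
- by move=> u v; rewrite linearD gD.
- by move=> c u; rewrite linearZ gZ.
Qed.

Variable op : V -> V -> V.
Variable opB : W -> W -> W.
Hypothesis hop : bilin op.
Hypothesis hopB : bilin opB.

Lemma pLdA y x a : pairing y (LdA op x a) = pairing (op x y) a.
Proof.
rewrite pE (@lin_rv (fun y => pairing (op x y) a)); last first.
- by move=> c u; rewrite (bZr hop) pZl.
- by move=> u v; rewrite (bDr hop) pDl.
by apply: eq_bigr => j _; rewrite mxE.
Qed.
Lemma pRdA y x a : pairing y (RdA op x a) = pairing (op y x) a.
Proof.
rewrite pE (@lin_rv (fun y => pairing (op y x) a)); last first.
- by move=> c u; rewrite (bZl hop) pZl.
- by move=> u v; rewrite (bDl hop) pDl.
by apply: eq_bigr => j _; rewrite mxE.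
Qed.
Lemma pLdAs a x b : pairing (LdAs opB a x) b = pairing x (opB a b).
Proof.
rewrite pE (@lin_cv (fun b => pairing x (opB a b))); last first.
- by move=> c u; rewrite (bZr hopB) pZr.
- by move=> u v; rewrite (bDr hopB) pDr.
by apply: eq_bigr => j _; rewrite mxE mulrC.
Qed.
Lemma pRdAs a x b : pairing (RdAs opB a x) b = pairing x (opB b a).
Proof.
rewrite pE (@lin_cv (fun b => pairing x (opB b a))); last first.
- by move=> c u; rewrite (bZl hopB) pZr.
- by move=> u v; rewrite (bDl hopB) pDr.
by apply: eq_bigr => j _; rewrite mxE mulrC.
Qed.

Lemma bLdA : bilin (LdA op).
Proof.
split=> [x|y] c u v; apply: pinjr => z; rewrite pDr pZr !pLdA.
  by rewrite pDr pZr.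
by rewrite (bDl hop) (bZl hop) pDl pZl.
Qed.
Lemma bRdA : bilin (RdA op).
Proof.
split=> [x|y] c u v; apply: pinjr => z; rewrite pDr pZr !pRdA.
  by rewrite pDr pZr.
by rewrite (bDr hop) (bZr hop) pDl pZl.
Qed.
Lemma bLdAs : bilin (LdAs opB).
Proof.
split=> [x|y] c u v; apply: pinjl => z; rewrite pDl pZl !pLdAs.
  by rewrite pDl pZl.
by rewrite (bDl hopB) (bZl hopB) pDr pZr.
Qed.
Lemma bRdAs : bilin (RdAs opB).
Proof.
split=> [x|y] c u v; apply: pinjl => z; rewrite pDl pZl !pRdAs.
  by rewrite pDl pZl.
by rewrite (bDr hopB) (bZr hopB) pDr pZr.
Qed.
End Conc.


Lemma antidend0 (K : fieldType) (X : lmodType K) : antidend (fun _ _ : X => 0) (fun _ _ => 0).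
Proof.
split; first exact: bilin0; split; first exact: bilin0.
by move=> x y z /=; split; rewrite oppr0.
Qed.

Lemma aa_mp_semi (K : fieldType) (A B : lmodType K) (mA : A -> A -> A) (lA rA : A -> B -> B) :
  bilin mA -> aa_bimodule mA lA rA ->
  aa_matched_pair mA (fun _ _ : B => 0) lA rA (fun _ _ => 0) (fun _ _ => 0).
Proof.
move=> hm h; have [hl [hr _]] := h; split => //; split.
  split; first exact: bilin0; split; first exact: bilin0.
  by move=> *; split; rewrite oppr0.
move=> x y a b; split; [split|split];
  by rewrite /= ?(b0r hm) ?(b0l hm) ?(b0r hl) ?(b0l hl) ?(b0r hr) ?(b0l hr) ?oppr0 ?subr0 ?addr0.
Qed.

Theorem theorem4p1p7 (K : fieldType) (n : nat)
    (sA pA : 'rV[K]_n -> 'rV[K]_n -> 'rV[K]_n)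
    (sB pB : 'cV[K]_n -> 'cV[K]_n -> 'cV[K]_n) :
  antidend sA pA -> antidend sB pB ->
  (aa_matched_pair (dstar sA pA) (dstar sB pB)
     (RdA pA) (LdA sA) (RdAs pB) (LdAs sB)
   <->
   ad_matched_pair sA pA sB pB
     (fun x a => RdA sA x a + RdA pA x a) (fun x a => - LdA pA x a)
     (fun x a => - RdA sA x a) (fun x a => LdA sA x a + LdA pA x a)
     (fun a x => RdAs sB a x + RdAs pB a x) (fun a x => - LdAs pB a x)
     (fun a x => - RdAs sB a x) (fun a x => LdAs sB a x + LdAs pB a x)).
Proof.
move=> adA adB.
have [hsA [hpA _]] := adA; have [hsB [hpB _]] := adB.
have b1 := bilin_add (bRdA hsA) (bRdA hpA).
have b2 := bilin_opp (bLdA hpA).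
have b3 := bilin_opp (bRdA hsA).
have b4 := bilin_add (bLdA hsA) (bLdA hpA).
have b5 := bilin_add (bRdAs hsB) (bRdAs hpB).
have b6 := bilin_opp (bLdAs hpB).
have b7 := bilin_opp (bRdAs hsB).
have b8 := bilin_add (bLdAs hsB) (bLdAs hpB).
have e1 : forall x y, dstar sA pA x y = sA x y + pA x y by move=> x y; rewrite /dstar addrC.
have e2 : forall x y, dstar sB pB x y = sB x y + pB x y by move=> x y; rewrite /dstar addrC.
have e3 : forall x y, RdA pA x y = (RdA sA x y + RdA pA x y) + - RdA sA x y.
  by move=> x y; rewrite [RHS]addrC addKr.
have e4 : forall x y, LdA sA x y = - LdA pA x y + (LdA sA x y + LdA pA x y).
  by move=> x y; rewrite addrC addrK.
have e5 : forall x y, RdAs pB x y = (RdAs sB x y + RdAs pB x y) + - RdAs sB x y.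
  by move=> x y; rewrite [RHS]addrC addKr.
have e6 : forall x y, LdAs sB x y = - LdAs pB x y + (LdAs sB x y + LdAs pB x y).
  by move=> x y; rewrite addrC addrK.
split.
- move=> mp; split.
  + split => //.
    apply: (@ad_of_aa _ _ _ _ _ _ (@pDl K n) (@pNl K n) (@pDr K n) (@pNr K n) (@pinjl K n) (@pinjr K n)
       sA pA (dstar sA pA) _ _ (fun _ _ => 0) _ _ _ _ (RdA pA) (LdA sA) _ _ _ _
       (fun _ _ => 0) (fun _ _ => 0) adA (antidend0 _) b1 b2 b3 b4 (bilin0 _ _ _) (bilin0 _ _ _) (bilin0 _ _ _) (bilin0 _ _ _)).
    * by move=> z x b; rewrite pDr !(pRdA hsA, pRdA hpA).
    * by move=> z y a; rewrite pNr (pLdA hpA).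
    * by move=> a y c; rewrite p0l p0r addr0.
    * by move=> b x c; rewrite p0l p0r oppr0.
    * by move=> z x b; rewrite pNr (pRdA hsA).
    * by move=> z y a; rewrite pDr (pLdA hsA) (pLdA hpA).
    * by move=> a y c; rewrite p0l p0r oppr0.
    * by move=> b x c; rewrite p0l p0r addr0.
    * exact: e1.
    * by move=> *; rewrite addr0.
    * exact: e3.
    * exact: e4.
    * by move=> *; rewrite addr0.
    * by move=> *; rewrite addr0.
    * exact: aa_mp_semi (bilin_add hpA hsA) mp.1.
  + split => //.
    apply: (@ad_of_aa _ _ _ _ _ (fun a x => pairing x a)
       (fun a1 a2 x => @pDr K n x a1 a2) (fun a x => @pNr K n x a)
       (fun a x1 x2 => @pDl K n x1 x2 a) (fun a x => @pNl K n x a)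
       (fun a1 a2 H => @pinjr K n a1 a2 H) (fun x1 x2 H => @pinjl K n x1 x2 H)
       sB pB (dstar sB pB) _ _ (fun _ _ => 0) _ _ _ _ (RdAs pB) (LdAs sB) _ _ _ _
       (fun _ _ => 0) (fun _ _ => 0) adB (antidend0 _) b5 b6 b7 b8
       (bilin0 _ _ _) (bilin0 _ _ _) (bilin0 _ _ _) (bilin0 _ _ _)).
    * by move=> z x b; rewrite pDl !(pRdAs hsB, pRdAs hpB).
    * by move=> z y a; rewrite pNl (pLdAs hpB).
    * by move=> a y c; rewrite p0l p0r addr0.
    * by move=> b x c; rewrite p0l p0r oppr0.
    * by move=> z x b; rewrite pNl (pRdAs hsB).
    * by move=> z y a; rewrite pDl (pLdAs hsB) (pLdAs hpB).
    * by move=> a y c; rewrite p0l p0r oppr0.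
    * by move=> b x c; rewrite p0l p0r addr0.
    * exact: e2.
    * by move=> *; rewrite addr0.
    * exact: e5.
    * exact: e6.
    * by move=> *; rewrite addr0.
    * by move=> *; rewrite addr0.
    * exact: aa_mp_semi (bilin_add hpB hsB) mp.2.1.
  + apply: (@ad_of_aa _ _ _ _ _ _ (@pDl K n) (@pNl K n) (@pDr K n) (@pNr K n) (@pinjl K n) (@pinjr K n)
       sA pA (dstar sA pA) sB pB (dstar sB pB) _ _ _ _ (RdA pA) (LdA sA) _ _ _ _
       (RdAs pB) (LdAs sB) adA adB b1 b2 b3 b4 b5 b6 b7 b8); last exact: mp.
    * by move=> z x b; rewrite pDr !(pRdA hsA, pRdA hpA).
    * by move=> z y a; rewrite pNr (pLdA hpA).
    * by move=> a y c; rewrite pDl !(pRdAs hsB, pRdAs hpB).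
    * by move=> b x c; rewrite pNl (pLdAs hpB).
    * by move=> z x b; rewrite pNr (pRdA hsA).
    * by move=> z y a; rewrite pDr (pLdA hsA) (pLdA hpA).
    * by move=> a y c; rewrite pNl (pRdAs hsB).
    * by move=> b x c; rewrite pDl (pLdAs hsB) (pLdAs hpB).
    * exact: e1.
    * exact: e2.
    * exact: e3.
    * exact: e4.
    * exact: e5.
    * exact: e6.
- case=> _ _ full.
  apply: (mp_of_assoc (bilin_add hpA hsA) (bilin_add hpB hsB) (bRdA hpA) (bLdA hsA)
    (bRdAs hpB) (bLdAs hsB)) => u v w.
  rewrite -!(sum_SP e1 e2 e3 e4 e5 e6).
  exact: (ad_assoc_pair full).
Qed.
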